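(* In the dynamic weighted storage system described in the context, the weight reassignment protocol is live: servers can change their weights over time, i.e., the view installed in the system keeps being changed to its successor view, so that new weights (obtained by pairwise weight reassignments) take effect.
   Context: System: a finite set $S=\{s_1,\dots,s_n\}$ of servers and an infinite set of clients; every process knows $S$; processes communicate over reliable links by message passing; the system is asynchronous (no bounds on processing times or message delays, local clocks are unsynchronized counters); processes fail only by crashing (a process is correct if it does not crash); at most $f$ servers crash and $2f+1\le n$. Views: the system passes through a sequence of views $v_0,v_1,\dots$ with $v_{k+1}=v_k.succ$; $v<w$ means $w$ is obtained from $v$ by applying $succ$ one or more times. Each server $s$ has a current view $s.cview$ (initially $v_0$) and a weight in every view; all weights in $v_0$ equal $1$; in every view every server's weight lies strictly between $\mathbb{wl}=n/(2(n-f))$ and $\mathbb{wu}=n/(2f)$, and the total weight of all servers is at most $n$. A weighted majority (quorum) for view $v$ is a set of servers whose weights in $v$ sum to more than $n/2$. The number of views ever requested is finite. Weights for a view $v.succ$ are changed only by pairwise weight reassignments (a server moves an amount $\epsilon$ of its weight for $v.succ$ to a lower-latency server, respecting the bounds $\mathbb{wl},\mathbb{wu}$) made before the involved servers start changing to $v.succ$. View changer (run by each server $s$ with $s.cview=v$): when a local timeout for $v$ expires, $s$ sends $\langle\text{change\_view},v.succ\rangle$ to all servers. Once $s$ has received or sent a change\_view message for $v.succ$, it: forwards $\langle\text{change\_view},v.succ\rangle$ if not already sent; disables read/write operations; stops accepting pairwise reassignments for $v.succ$; sends $\langle\text{state\_update},(val,ts,cid),v,w\rangle$ to all servers, where $(ts,cid,val)$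 is its register state and $w$ its weight in $v$ (at this point $s$ has uninstalled $v$); waits until it has state\_update messages for view $v$ whose weights sum to more than $n/2$; sets its register to the value with the lexicographically largest $(ts,cid)$ among them; sets $s.cview\leftarrow v.succ$ (it installs $v.succ$), restarts the timeout and re-enables read/write operations. A server requests to change its view by sending change\_view. A view $v$ is installed in the system once some server installs $v$ and no server has a current view greater than $v$; $lastview$ denotes the last view installed in the system, and a view is uninstalled from the system when its successor is installed. *)

(* Defs.v *)
From mathcomp Require Import all_boot all_order all_algebra.
Set Implicit Arguments. Unset Strict Implicit. Unset Printing Implicit Defensive.
Import Order.TTheory GRing.Theory Num.Theory.
Local Open Scope ring_scope.

(* Views: v_k is represented by the natural number k, v.succ = v.+1. *)

Section Model.
Variables (n : nat) (R : realFieldType) (Val : Type).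

Definition server := 'I_n.
Definition view := nat.
Definition reg_state := (nat * nat * Val)%type.   (* (ts, cid, val) *)

Definition key_le (a b : reg_state) : bool :=
  (a.1.1 < b.1.1)%N || ((a.1.1 == b.1.1) && (a.1.2 <= b.1.2)%N).

Inductive msg :=
| ChangeView of view
| StateUpdate of reg_state & view & R.

(* wl < x < wu with wl = n/(2(n-f)), wu = n/(2f) (for f = 0, wu = +oo) *)
Definition in_bounds (f : nat) (x : R) : Prop :=
  n%:R < 2 * (n - f)%:R * x /\ 2 * f%:R * x < n%:R.

Definition reassign (f : nat) (w w' : server -> R) : Prop :=
  exists (s t : server) (eps : R),
    ((s != t) /\ (0 < eps) /\ (w' s = w s - eps) /\ (w' t = w t + eps) /\ ((forall u, u != s -> u != t -> w' u = w u)) /\ (in_bounds f (w' s)) /\ (in_bounds f (w' t))).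

Inductive reassign_reach (f : nat) : (server -> R) -> (server -> R) -> Prop :=
| rr_refl w : reassign_reach f w w
| rr_step w w' w'' : reassign f w w' -> reassign_reach f w' w'' ->
                     reassign_reach f w w''.

Definition valid_weights (f : nat) (W : view -> server -> R) : Prop :=
  (((forall s, W 0%N s = 1)) /\ ((forall k, reassign_reach f (W k) (W k.+1))) /\ ((forall k s, in_bounds f (W k s))) /\ ((forall k, \sum_(s : server) W k s <= n%:R))).

Record config := Config {
  cview   : server -> view;
  changing: server -> bool;          (* s is changing view (ops disabled, state_update sent) *)
  reg     : server -> reg_state;
  sent    : server -> msg -> Prop;   (* sent p m : p has sent m to all servers *)
  rcvd    : server -> server -> msg -> Prop; (* rcvd q p m : q has received m from p *)
  crashed : server -> Prop
}.

Definition init_config (r0 : server -> reg_state) : config :=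
  Config (fun _ => 0%N) (fun _ => false) r0
         (fun _ _ => False) (fun _ _ _ => False) (fun _ => False).

Inductive action_kind := Timeout | StartChange | Install | Write of reg_state.

Inductive label :=
| Skip
| Deliver of server & server & msg
| Crash of server
| Act of server & action_kind.

Definition same_others (s : server) (c c' : config) : Prop :=
  (forall u, u != s -> cview c' u = cview c u) /\
  (forall u, u != s -> changing c' u = changing c u) /\
  (forall u, u != s -> reg c' u = reg c u) /\
  (forall q p m, rcvd c' q p m <-> rcvd c q p m) /\
  (forall u, crashed c' u <-> crashed c u).

Definition sent_add (c c' : config) (s : server) (ms : msg -> Prop) : Prop :=
  forall p m, sent c' p m <-> (sent c p m \/ (p = s /\ ms m)).

Definition CV_trigger (c : config) (s : server) : Prop :=
  sent c s (ChangeView (cview c s).+1) \/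
  exists p, rcvd c s p (ChangeView (cview c s).+1).

Definition su_quorum (c : config) (s : server) (Q : {set server})
           (r : server -> reg_state) (w : server -> R) : Prop :=
  (forall p, p \in Q -> rcvd c s p (StateUpdate (r p) (cview c s) (w p))) /\
  n%:R / 2 < \sum_(p in Q) w p.

Definition step (W : view -> server -> R) (c : config) (l : label) (c' : config)
  : Prop :=
  match l with
  | Skip =>
      ((cview c' = cview c) /\ (changing c' = changing c) /\ (reg c' = reg c) /\ ((forall p m, sent c' p m <-> sent c p m)) /\ ((forall q p m, rcvd c' q p m <-> rcvd c q p m)) /\ ((forall u, crashed c' u <-> crashed c u)))
  | Deliver q p m =>
      ((sent c p m) /\ (cview c' = cview c) /\ (changing c' = changing c) /\ (reg c' = reg c) /\ ((forall p' m', sent c' p' m' <-> sent c p' m')) /\ ((forall q0 p0 m0, rcvd c' q0 p0 m0 <->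
                            (rcvd c q0 p0 m0 \/ (q0 = q /\ p0 = p /\ m0 = m)))) /\ ((forall u, crashed c' u <-> crashed c u)))
  | Crash s =>
      ((~ crashed c s) /\ (cview c' = cview c) /\ (changing c' = changing c) /\ (reg c' = reg c) /\ ((forall p m, sent c' p m <-> sent c p m)) /\ ((forall q p m, rcvd c' q p m <-> rcvd c q p m)) /\ ((forall u, crashed c' u <-> (crashed c u \/ u = s))))
  | Act s a =>
      ~ crashed c s /\ same_others s c c' /\
      match a with
      | Timeout =>   (* the local timeout for cview expires: send change_view *)
          ((~~ changing c s) /\ (~ sent c s (ChangeView (cview c s).+1)) /\ (cview c' s = cview c s) /\ (changing c' s = changing c s) /\ (reg c' s = reg c s) /\ (sent_add c c' s (fun m => m = ChangeView (cview c s).+1)))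
      | StartChange =>
          ((~~ changing c s) /\ (CV_trigger c s) /\ (cview c' s = cview c s) /\ (changing c' s = true) /\ (reg c' s = reg c s) /\ (sent_add c c' s (fun m =>
                 m = ChangeView (cview c s).+1 \/
                 m = StateUpdate (reg c s) (cview c s) (W (cview c s) s))))
      | Install =>
          changing c s /\
          exists (Q : {set server}) (r : server -> reg_state) (w : server -> R) p0,
          ((su_quorum c s Q r w) /\ (p0 \in Q) /\ ((forall p, p \in Q -> key_le (r p) (r p0))) /\ (reg c' s = r p0) /\ (cview c' s = (cview c s).+1) /\ (changing c' s = false) /\ ((forall p m, sent c' p m <-> sent c p m)))
      | Write r' =>   (* read/write operations (enabled only when not changing) *)
          ((~~ changing c s) /\ (cview c' s = cview c s) /\ (changing c' s = changing c s) /\ (reg c' s = r') /\ ((forall p m, sent c' p m <-> sent c p m)))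
      end
  end.

Definition enabled_start (c : config) (s : server) : Prop :=
  ~~ changing c s /\ CV_trigger c s.

Definition enabled_install (c : config) (s : server) : Prop :=
  changing c s /\ exists Q r w, su_quorum c s Q r w.

Definition correct (run : nat -> config) (s : server) : Prop :=
  forall t, ~ crashed (run t) s.

Definition admissible (f : nat) (W : view -> server -> R)
    (run : nat -> config) (lbl : nat -> label) : Prop :=
  (((exists r0, run 0%N = init_config r0)) /\ ((forall t, step W (run t) (lbl t) (run t.+1))) /\ (
      (forall A : {set server}, (forall s, s \in A -> ~ correct run s) ->
                                (#|A| <= f)%N)) /\ (
      (forall t p q m, correct run p -> correct run q -> sent (run t) p m ->
                       exists t', rcvd (run t') q p m)) /\ (
      (forall s t0, correct run s ->
         (forall t, (t0 <= t)%N -> enabled_start (run t) s) ->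
         exists t, (t0 <= t)%N /\ lbl t = Act s StartChange)) /\ ((forall s t0, correct run s ->
         (forall t, (t0 <= t)%N -> enabled_install (run t) s) ->
         exists t, (t0 <= t)%N /\ lbl t = Act s Install)) /\ (
      (exists K, forall t s k, sent (run t) s (ChangeView k) -> (k <= K)%N))).

Definition installed_in_system (c : config) (v : view) : Prop :=
  (exists s, cview c s = v) /\ (forall s, (cview c s <= v)%N).

End Model.

(* Main.v *)
Require Import Defs.
From mathcomp Require Import all_boot all_order all_algebra.
From mathcomp Require Import zify ring lra.
From Stdlib Require Import Classical.
Import Order.TTheory GRing.Theory Num.Theory.
Local Open Scope ring_scope.

Lemma step_local {R : realFieldType} {Val : Type} {n : nat}
  {W : view -> server n -> R} {run : nat -> config n R Val} {lbl : nat -> label n R Val}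
  (Hstep : forall t, step W (run t) (lbl t) (run t.+1)) t u :
 (cview (run t.+1) u = cview (run t) u /\ changing (run t.+1) u = changing (run t) u)
 \/ (lbl t = Act R u (StartChange Val) /\ cview (run t.+1) u = cview (run t) u /\ changing (run t.+1) u /\ ~~ changing (run t) u
     /\ sent (run t.+1) u (ChangeView R Val (cview (run t) u).+1)
     /\ sent (run t.+1) u (StateUpdate (reg (run t) u) (cview (run t) u) (W (cview (run t) u) u)))
 \/ (lbl t = Act R u (Install Val) /\ changing (run t) u /\ cview (run t.+1) u = (cview (run t) u).+1 /\ ~~ changing (run t.+1) u).
Proof.
have := Hstep t. case E: (lbl t) => [|q p m|s|s a] /=.
- move=> [-> [-> _]]; by left.
- move=> [_ [-> [-> _]]]; by left.
- move=> [_ [-> [-> _]]]; by left.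
- move=> [_ [[Hcv [Hch _]] Ha]].
  case: (eqVneq u s) => [->|Hus]; last by left; rewrite Hcv // Hch.
  case: a E Ha => [E|E|E|r' E] /=.
  + move=> [_ [_ [-> [-> _]]]]; by left.
  + move=> [Hnc [_ [Hcv' [Hch' [_ Hsent]]]]]. right; left.
    rewrite Hcv' Hch'; repeat split => //; apply/Hsent; right; split => //; [left|right]; done.
  + move=> [Hc [Q [r [w [p0 [_ [_ [_ [_ [Hcv' [Hch' _]]]]]]]]]]]. right; right. by rewrite Hcv' Hch'.
  + move=> [_ [-> [-> _]]]; by left.
Qed.

Lemma sent_mono {R : realFieldType} {Val : Type} {n : nat}
  {W : view -> server n -> R} {run : nat -> config n R Val} {lbl : nat -> label n R Val}
  (Hstep : forall t, step W (run t) (lbl t) (run t.+1)) t p m :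
  sent (run t) p m -> sent (run t.+1) p m.
Proof.
have := Hstep t. case: (lbl t) => [|q p' m'|s|s a] /=.
- by move=> [_ [_ [_ [H _]]]] Hs; apply/H.
- by move=> [_ [_ [_ [_ [H _]]]]] Hs; apply/H.
- by move=> [_ [_ [_ [_ [H _]]]]] Hs; apply/H.
- move=> [_ [_ Ha]] Hs. case: a Ha => /=.
  + by move=> [_ [_ [_ [_ [_ H]]]]]; apply/H; left.
  + by move=> [_ [_ [_ [_ [_ H]]]]]; apply/H; left.
  + by move=> [_ [Q [r [w [p0 [_ [_ [_ [_ [_ [_ H]]]]]]]]]]]; apply/H.
  + by move=> r' [_ [_ [_ [_ H]]]]; apply/H.
Qed.

Lemma rcvd_mono {R : realFieldType} {Val : Type} {n : nat}
  {W : view -> server n -> R} {run : nat -> config n R Val} {lbl : nat -> label n R Val}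
  (Hstep : forall t, step W (run t) (lbl t) (run t.+1)) t q p m :
  rcvd (run t) q p m -> rcvd (run t.+1) q p m.
Proof.
have := Hstep t. case: (lbl t) => [|q' p' m'|s|s a] /=.
- by move=> [_ [_ [_ [_ [H _]]]]] Hs; apply/H.
- by move=> [_ [_ [_ [_ [_ [H _]]]]]] Hs; apply/H; left.
- by move=> [_ [_ [_ [_ [_ [H _]]]]]] Hs; apply/H.
- by move=> [_ [[_ [_ [_ [H _]]]] _]] Hs; apply/H.
Qed.

Lemma sent_cv {R : realFieldType} {Val : Type} {n : nat}
  {W : view -> server n -> R} {run : nat -> config n R Val} {lbl : nat -> label n R Val}
  (Hstep : forall t, step W (run t) (lbl t) (run t.+1)) t u j :
  sent (run t.+1) u (ChangeView R Val j) ->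
  sent (run t) u (ChangeView R Val j) \/ j = (cview (run t) u).+1.
Proof.
have := Hstep t. case: (lbl t) => [|q p' m'|s|s a] /=.
- by move=> [_ [_ [_ [H _]]]] Hs; left; apply/H.
- by move=> [_ [_ [_ [_ [H _]]]]] Hs; left; apply/H.
- by move=> [_ [_ [_ [_ [H _]]]]] Hs; left; apply/H.
- move=> [_ [_ Ha]] Hs. case: a Ha => /=.
  + move=> [_ [_ [_ [_ [_ H]]]]]; case/H: Hs => [|[-> Hj]]; first by left.
    by right; case: Hj.
  + move=> [_ [_ [_ [_ [_ H]]]]]; case/H: Hs => [|[-> [Hj|//]]]; first by left.
    by right; case: Hj.
  + by move=> [_ [Q [r [w [p0 [_ [_ [_ [_ [_ [_ H]]]]]]]]]]]; left; apply/H.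
  + by move=> r' [_ [_ [_ [_ H]]]]; left; apply/H.
Qed.

Lemma cview_step {R : realFieldType} {Val : Type} {n : nat}
  {W : view -> server n -> R} {run : nat -> config n R Val} {lbl : nat -> label n R Val}
  (Hstep : forall t, step W (run t) (lbl t) (run t.+1)) t u :
  (cview (run t) u <= cview (run t.+1) u <= (cview (run t) u).+1)%N.
Proof.
case: (step_local Hstep t u) => [[-> _]|[[_ [-> _]]|[_ [_ [-> _]]]]]; by rewrite ?leqnSn ?leqnn.
Qed.

Lemma cview_mono {R : realFieldType} {Val : Type} {n : nat}
  {W : view -> server n -> R} {run : nat -> config n R Val} {lbl : nat -> label n R Val}
  (Hstep : forall t, step W (run t) (lbl t) (run t.+1)) t t' u :
  (t <= t')%N -> (cview (run t) u <= cview (run t') u)%N.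
Proof.
move=> /subnKC <-; elim: (t' - t)%N => [|d IH]; first by rewrite addn0.
rewrite addnS; apply: leq_trans IH _.
by case/andP: (cview_step Hstep (t + d)%N u).
Qed.

Lemma rcvd_mono_le {R : realFieldType} {Val : Type} {n : nat}
  {W : view -> server n -> R} {run : nat -> config n R Val} {lbl : nat -> label n R Val}
  (Hstep : forall t, step W (run t) (lbl t) (run t.+1)) t t' q p m :
  (t <= t')%N -> rcvd (run t) q p m -> rcvd (run t') q p m.
Proof.
move=> /subnKC <-; elim: (t' - t)%N => [|d IH]; first by rewrite addn0.
by rewrite addnS => H; apply: (rcvd_mono Hstep); apply: IH.
Qed.

Lemma inv_su {R : realFieldType} {Val : Type} {n : nat}
  {W : view -> server n -> R} {run : nat -> config n R Val} {lbl : nat -> label n R Val}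
  (Hstep : forall t, step W (run t) (lbl t) (run t.+1))
  (H0 : exists r0, run 0%N = init_config R r0) t u k :
  ((k < cview (run t) u)%N || ((k == cview (run t) u) && changing (run t) u)) ->
  (exists r, sent (run t) u (StateUpdate r k (W k u))) /\ sent (run t) u (ChangeView R Val k.+1).
Proof.
elim: t k => [|t IH] k.
  by case: H0 => r0 ->; rewrite /= andbF.
have Hm := sent_mono Hstep t.
have IH' : ((k < cview (run t) u)%N || ((k == cview (run t) u) && changing (run t) u)) ->
  (exists r, sent (run t.+1) u (StateUpdate r k (W k u))) /\ sent (run t.+1) u (ChangeView R Val k.+1).
  by move=> /IH [[r Hr] Hc]; split; [exists r|]; apply: Hm.
case: (step_local Hstep t u) => [[-> ->] //|[[_ [-> [-> [_ [Hc Hs]]]]]|[_ [Hc [-> /negbTE ->]]]]].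
- rewrite andbT; case/orP => [Hk|/eqP ->]; first by apply: IH'; rewrite Hk.
  by split => //; exists (reg (run t) u).
- rewrite andbF orbF ltnS leq_eqVlt; case/orP => [/eqP Ek|Hk]; apply: IH'.
    by rewrite Ek eqxx Hc orbT.
  by rewrite Hk.
Qed.

Lemma inv_cv {R : realFieldType} {Val : Type} {n : nat}
  {W : view -> server n -> R} {run : nat -> config n R Val} {lbl : nat -> label n R Val}
  (Hstep : forall t, step W (run t) (lbl t) (run t.+1))
  (H0 : exists r0, run 0%N = init_config R r0) t u j :
  sent (run t) u (ChangeView R Val j) -> (j <= (cview (run t) u).+1)%N.
Proof.
elim: t => [|t IH].
  by case: H0 => r0 ->.
case/andP: (cview_step Hstep t u) => H1 _.
case/(sent_cv Hstep) => [/IH Hj|->]; last by rewrite ltnS.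
by apply: leq_trans Hj _; rewrite ltnS.
Qed.

Lemma G_lemma {R : realFieldType} {Val : Type} {n : nat}
  {W : view -> server n -> R} {run : nat -> config n R Val} {lbl : nat -> label n R Val}
  (Hstep : forall t, step W (run t) (lbl t) (run t.+1))
  (Hlinks : forall t p q m, correct run p -> correct run q -> sent (run t) p m ->
                       exists t', rcvd (run t') q p m)
  (HfS : forall s t0, correct run s ->
         (forall t, (t0 <= t)%N -> enabled_start (run t) s) ->
         exists t, (t0 <= t)%N /\ lbl t = Act R s (StartChange Val))
  k p s0 t0 :
  correct run p -> correct run s0 -> sent (run t0) s0 (ChangeView R Val k.+1) ->
  (exists t, (k <= cview (run t) p)%N) ->
  exists t, (k < cview (run t) p)%N || ((k == cview (run t) p) && changing (run t) p).
Proof.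
move=> Hp Hs0 Hsent [t1 Ht1].
have [t3 Hr3] := Hlinks t0 s0 p _ Hs0 Hp Hsent.
apply: NNPP => HG.
have Hle : forall t, (cview (run t) p <= k)%N.
  move=> t; rewrite leqNgt; apply/negP => H; apply: HG; exists t; by rewrite H.
have Heq : forall t, (t1 <= t)%N -> cview (run t) p = k.
  move=> t Ht; apply/eqP; rewrite eqn_leq Hle /=.
  exact: leq_trans Ht1 (cview_mono Hstep t1 t p Ht).
have Hnc : forall t, (t1 <= t)%N -> ~~ changing (run t) p.
  move=> t Ht; apply/negP => Hc; apply: HG; exists t; by rewrite Heq // eqxx Hc orbT.
have Hen : forall t, (maxn t1 t3 <= t)%N -> enabled_start (run t) p.
  move=> t; rewrite geq_max => /andP [Ht Ht']; split; first exact: Hnc.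
  right; exists s0; rewrite Heq //; exact: rcvd_mono_le Hstep _ _ _ _ _ Ht' Hr3.
have [t [Ht Hl]] := HfS p _ Hp Hen.
have := Hstep t; rewrite Hl /= => [[_ [_ [_ [_ [_ [Hch _]]]]]]].
have Ht1' : (t1 <= t.+1)%N by apply: leq_trans (leqnSn t); apply: leq_trans Ht; exact: leq_maxl.
by move: (Hnc _ Ht1'); rewrite Hch.
Qed.

Lemma sum_gt {R : realFieldType} {n : nat} (f : nat) (w : server n -> R) (Q : {set server n}) :
  (2 * f + 1 <= n)%N -> (forall p, in_bounds n f (w p)) -> (#|~: Q| <= f)%N ->
  n%:R / 2 < \sum_(p in Q) w p.
Proof.
move=> Hnf Hb HQc.
have HQ : (n - f <= #|Q|)%N.
  have := cardsC Q; rewrite card_ord => H; lia.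
have HN : (0 : R) < (n - f)%:R by rewrite ltr0n; lia.
have Hne : has (mem Q) (index_enum (server n)).
  have : (0 < #|Q|)%N by lia.
  case/card_gt0P => p Hp; apply/hasP; exists p => //; exact: mem_index_enum.
have Hlt : \sum_(p in Q) (n%:R : R) < \sum_(p in Q) (2 * (n - f)%:R * w p).
  by apply: ltr_sum => // p _; case: (Hb p).
rewrite sumr_const -mulr_sumr in Hlt.
have H1 : (n - f)%:R * n%:R <= (n%:R : R) *+ #|Q|.
  have H2 : ((n - f) * n <= n * #|Q|)%N by nia.
  by rewrite -mulrnA -natrM ler_nat.
rewrite ltr_pdivrMr; last by [].
set S := \sum_(p in Q) w p in Hlt *.
set X := (n%:R : R) *+ #|Q| in Hlt H1.
nra.
Qed.

Lemma level {R : realFieldType} {Val : Type} {n : nat}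
  {W : view -> server n -> R} {run : nat -> config n R Val} {lbl : nat -> label n R Val}
  (f : nat) (Hnf : (2 * f + 1 <= n)%N)
  (Hib : forall k s, in_bounds n f (W k s))
  (H0 : exists r0, run 0%N = init_config R r0)
  (Hstep : forall t, step W (run t) (lbl t) (run t.+1))
  (Hcr : forall A : {set server n}, (forall s, s \in A -> ~ correct run s) -> (#|A| <= f)%N)
  (Hlinks : forall t p q m, correct run p -> correct run q -> sent (run t) p m ->
                       exists t', rcvd (run t') q p m)
  (HfS : forall s t0, correct run s ->
         (forall t, (t0 <= t)%N -> enabled_start (run t) s) ->
         exists t, (t0 <= t)%N /\ lbl t = Act R s (StartChange Val))
  (HfI : forall s t0, correct run s ->
         (forall t, (t0 <= t)%N -> enabled_install (run t) s) ->
         exists t, (t0 <= t)%N /\ lbl t = Act R s (Install Val))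
  k s0 t0 :
  correct run s0 -> sent (run t0) s0 (ChangeView R Val k.+1) ->
  (forall q, correct run q -> exists t, (k <= cview (run t) q)%N) ->
  forall q, correct run q -> exists t, (k.+1 <= cview (run t) q)%N.
Proof.
move=> Hs0 Hsent Hreach q Hq.
have Hrc : forall p, exists x : bool * nat * reg_state Val,
    (x.1.1 <-> correct run p) /\
    (correct run p -> rcvd (run x.1.2) q p (StateUpdate x.2 k (W k p))).
  move=> p; case: (classic (correct run p)) => Hp.
  - have [t Ht] := G_lemma Hstep Hlinks HfS _ _ _ _ Hp Hs0 Hsent (Hreach p Hp).
    have [[r Hr] _] := inv_su Hstep H0 _ _ _ Ht.
    have [t' Ht'] := Hlinks _ _ _ _ Hp Hq Hr.
    by exists (true, t', r).
  - by exists (false, 0%N, reg (run 0%N) p).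
have [g Hg] := fin_all_exists Hrc.
apply: NNPP => HG.
have Hle : forall t, (cview (run t) q <= k)%N.
  move=> t; rewrite leqNgt; apply/negP => H; apply: HG; exists t; by [].
have [t2 Ht2] := G_lemma Hstep Hlinks HfS _ _ _ _ Hq Hs0 Hsent (Hreach q Hq).
have Hcq : cview (run t2) q = k /\ changing (run t2) q.
  case/orP: Ht2 => [H|/andP [/eqP <- ->] //].
  by move: (Hle t2); rewrite leqNgt H.
have Hpers : forall d, cview (run (t2 + d)%N) q = k /\ changing (run (t2 + d)%N) q.
  elim=> [|d [IH1 IH2]]; first by rewrite addn0.
  rewrite addnS.
  case: (step_local Hstep (t2 + d)%N q) => [[-> ->] //|[[_ [-> [-> _]]] //|[_ [_ [Hc _]]]]].
  by move: (Hle (t2 + d)%N.+1); rewrite Hc IH1 ltnn.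
set T := maxn t2 (\max_(p : server n) (g p).1.2)%N.
have Hen : forall t, (T <= t)%N -> enabled_install (run t) q.
  move=> t; rewrite geq_max => /andP [Ht Ht'].
  have Hd := Hpers (t - t2)%N; rewrite subnKC // in Hd.
  split; first exact: Hd.2.
  exists [set p | (g p).1.1], (fun p => (g p).2), (fun p => W k p); split.
  - move=> p; rewrite inE => Hgp; rewrite Hd.1.
    have Hcp : correct run p by apply/(Hg p).1.
    apply: (rcvd_mono_le Hstep _ _ _ _ _ _ ((Hg p).2 Hcp)).
    apply: leq_trans Ht'; exact: (@leq_bigmax _ (fun p => (g p).1.2) p).
  - apply: sum_gt; [exact: Hnf | by move=> p; exact: Hib | ].
    apply: Hcr => p; rewrite !inE => Hp Hcp.
    by move/negP: Hp; apply; apply/(Hg p).1.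
have [t [Ht Hl]] := HfI q _ Hq Hen.
have := Hstep t; rewrite Hl /= => [[_ [_ [_ [Q [r [w [p0 [_ [_ [_ [_ [Hcv _]]]]]]]]]]]]].
apply: HG; exists t.+1; rewrite Hcv.
have Hd := Hpers (t - t2)%N; rewrite subnKC in Hd; first by rewrite Hd.1.
apply: leq_trans Ht; exact: leq_maxl.
Qed.

Theorem theorem1 (R : realFieldType) (Val : Type) (n f : nat)
    (W : view -> server n -> R)
    (run : nat -> config n R Val) (lbl : nat -> label n R Val) :
  (2 * f + 1 <= n)%N ->
  valid_weights f W ->
  admissible f W run lbl ->
  forall (v : view),
    (exists t s, correct run s /\ sent (run t) s (ChangeView R Val v.+1)) ->
    (exists t, installed_in_system (run t) v.+1) /\
    (forall s, correct run s -> exists t, (v.+1 <= cview (run t) s)%N).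
Proof.
move=> Hnf [_ [_ [Hib _]]] [H0 [Hstep [Hcr [Hlinks [HfS [HfI _]]]]]] v [t [s [Hs Hsent]]].
have Hsk : forall k, (k <= v)%N -> sent (run t) s (ChangeView R Val k.+1).
  move=> k; rewrite leq_eqVlt => /orP [/eqP -> //|Hk].
  have Hv := inv_cv Hstep H0 _ _ _ Hsent; rewrite ltnS in Hv.
  have := inv_su Hstep H0 t s k.
  by rewrite (leq_trans Hk Hv) => /(_ isT) [].
have Hreach : forall k, (k <= v.+1)%N -> forall q, correct run q ->
    exists t, (k <= cview (run t) q)%N.
  elim=> [|k IH] Hk q Hq; first by exists 0%N.
  apply: (level _ Hnf Hib H0 Hstep Hcr Hlinks HfS HfI _ _ _ Hs (Hsk k Hk)) => //.
  by apply: IH; apply: ltnW.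
split; last by move=> q Hq; exact: Hreach v.+1 (leqnn _) q Hq.
have [t1 Ht1] := Hreach v.+1 (leqnn _) s Hs.
have exP : exists t, [exists u, (v.+1 <= cview (run t) u)%N].
  by exists t1; apply/existsP; exists s.
case: (ex_minnP exP) => tm /existsP [u Hu] Hmin.
case: tm Hu Hmin => [|tm] Hu Hmin.
  by move: Hu; case: H0 => r0 ->.
have Hall : forall w, (cview (run tm) w <= v)%N.
  move=> w; rewrite leqNgt; apply/negP => Hw.
  by have := Hmin tm (introT existsP (ex_intro _ w Hw)); rewrite ltnn.
have Hall' : forall w, (cview (run tm.+1) w <= v.+1)%N.
  move=> w; case/andP: (cview_step Hstep tm w) => _ H.
  by apply: leq_trans H _; rewrite ltnS.
exists tm.+1; split; last exact: Hall'.
by exists u; apply/eqP; rewrite eqn_leq Hall' Hu.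
Qed.
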